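(* Let $q\ge 3$, $k\ge 1$ and $h\geq 2$ be integers with $h\le \lfloor q/2\rfloor$. Then $$SO(S_{q,h,k})=(2qk-8k+8)\sqrt{2}+(8k-8)\sqrt{5}.$$
   Context: For a finite simple graph $G$, $SO(G)=\sum_{uv\in E(G)}\sqrt{d_u^2+d_v^2}$, where $d_u$ is the degree of $u$ in $G$ (the Sombor index). The spiro-chain $S_{q,h,k}$ is the chain of $k$ disjoint copies $G_1,\ldots,G_k$ of the cycle $C_q$ with respect to vertices $x_i,y_i\in V(G_i)$ at distance $h$ in $G_i$; i.e. it is obtained from the disjoint union of the $k$ cycles by identifying $y_i$ with $x_{i+1}$ for $i=1,\ldots,k-1$. Thus in each cycle the distance between two consecutive contact vertices is $h$. *)

(* Defs.v *)
From mathcomp Require Import all_boot all_order all_algebra.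
Unset Printing Implicit Defensive.
Import Order.TTheory GRing.Theory Num.Theory.

Definition deg (T : finType) (e : rel T) (u : T) : nat := #|[set v | e u v]|.

(* Sombor index: sum over edges uv of sqrt(d_u^2 + d_v^2).  Each (unordered)
   edge appears twice as an ordered pair, hence the factor 1/2. *)
Definition sombor (R : rcfType) (T : finType) (e : rel T) : R :=
  2^-1 * \sum_(u : T) \sum_(v : T | e u v)
           Num.sqrt (((deg T e u) ^ 2 + (deg T e v) ^ 2)%N%:R).

(* Disjoint union of k copies G_0..G_{k-1} of C_q; vertex (i,j) is vertex j
   of copy i.  x_i := (i,0), y_i := (i,h). *)
Definition spiro_T (q k : nat) := ('I_k * 'I_q)%type.

Definition cyc_adj (q : nat) (a b : 'I_q) : bool :=
  (a.+1 %% q == b) || (b.+1 %% q == a).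

(* identification y_i = x_{i+1} (symmetrised) *)
Definition glue (q h k : nat) : rel (spiro_T q k) := fun u v =>
  ((u.1.+1 == v.1 :> nat) && (u.2 == h :> nat) && (v.2 == 0 :> nat)) ||
  ((v.1.+1 == u.1 :> nat) && (v.2 == h :> nat) && (u.2 == 0 :> nat)).

Definition same (q h k : nat) : rel (spiro_T q k) := connect (glue q h k).

Definition is_rep (q h k : nat) (u : spiro_T q k) : bool :=
  [forall v, same q h k u v ==> (enum_rank u <= enum_rank v)%N].

(* vertex set of S_{q,h,k}: the equivalence classes *)
Definition spiro_V (q h k : nat) := {u : spiro_T q k | is_rep q h k u}.

Definition spiro_adj (q h k : nat) : rel (spiro_V q h k) := fun u v =>
  (val u != val v) &&
  [exists a : spiro_T q k, exists b : spiro_T q k,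
     [&& same q h k (val u) a, same q h k (val v) b, a.1 == b.1 & cyc_adj q a.2 b.2]].

(* Main.v *)
Require Import Defs.
From mathcomp Require Import all_boot all_order all_algebra zify ring.
Import Order.TTheory GRing.Theory Num.Theory.
Set Implicit Arguments.
Unset Strict Implicit.

Lemma sum_s1 n : \sum_(i < n) ((i.+1 < n) : nat) = n.-1.
Proof.
case: n => [|n]; first by rewrite big_ord0.
rewrite big_ord_recr /= ltnn addn0.
rewrite (eq_bigr (fun _ => 1)); last by move=> i _; rewrite /= ltnS ltn_ord.
by rewrite sum1_card card_ord.
Qed.

Lemma sum_s2 n : \sum_(i < n) ((0 < i) : nat) = n.-1.
Proof.
case: n => [|n]; first by rewrite big_ord0.
rewrite big_ord_recl /= add0n.
rewrite (eq_bigr (fun _ => 1)); last by move=> i _.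
by rewrite sum1_card card_ord.
Qed.

Lemma sum_eq1 q (m : nat) (hm : m < q) (P : bool) :
  \sum_(j < q) (((j == m :> nat) && P) : nat) = P.
Proof.
rewrite (bigD1 (Ordinal hm)) //= eqxx big1 ?addn0 // => j.
by rewrite -val_eqE /= => /negbTE ->.
Qed.

Section Spiro.
Variables q h k : nat.
Hypothesis Hq : 2 < q.
Hypothesis Hh : 1 < h.
Hypothesis Hhq : h + h <= q.

Local Notation T := (spiro_T q k).

Lemma modS_small j : j < q -> j.+1 %% q = if j.+1 == q then 0 else j.+1.
Proof. move=> hj; case: eqP => [->|ne]; first by rewrite modnn. rewrite modn_small //; lia. Qed.

Lemma cyc_adjP (a b : 'I_q) : cyc_adj q a b <->
  ((b:nat) = a.+1 \/ (a.+1 = q /\ (b:nat) = 0) \/ (a:nat) = b.+1 \/ (b.+1 = q /\ (a:nat) = 0)).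
Proof.
have := ltn_ord a; have := ltn_ord b.
rewrite /cyc_adj !modS_small //.
case: ifP => [/eqP ? | /negbT ?]; case: ifP => [/eqP ? | /negbT ?]; move=> ? ?; split => H; lia.
Qed.

Definition tedge (a b : T) := (a.1 == b.1 :> nat) && cyc_adj q a.2 b.2.

Lemma glue2 (u w v : T) : glue q h k u w -> glue q h k w v -> u = v.
Proof.
case: u => [[u1 ?] [u2 ?]]; case: w => [[w1 ?] [w2 ?]]; case: v => [[v1 ?] [v2 ?]].
rewrite /glue /= => H1 H2.
have e1 : u1 = v1 by lia. have e2 : u2 = v2 by lia.
subst; congr pair; exact: val_inj.
Qed.

Local Notation same := (same q h k).
Local Notation glue := (glue q h k).

Lemma glue_sym : symmetric glue.
Proof. by move=> u v; rewrite /glue orbC. Qed.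

Lemma same_sym u v : same u v = same v u.
Proof. exact: (sym_connect_sym glue_sym). Qed.

Lemma same_trans u v w : same u v -> same v w -> same u w.
Proof. exact: connect_trans. Qed.

Lemma same_refl u : same u u.
Proof. exact: connect0. Qed.

Lemma sameE u v : same u v = (u == v) || glue u v.
Proof.
apply/idP/idP; last first.
  by case/orP => [/eqP->|g]; [exact: connect0 | exact: connect1].
case/connectP => p; elim: p u => [|w p IH] u /=; first by move=> _ ->; rewrite eqxx.
case/andP => g pth lst; case/orP: (IH w pth lst) => [/eqP eq|g2].
  by rewrite -eq g orbT.
by rewrite (glue2 g g2) eqxx.
Qed.

Lemma rep_uniq u v : is_rep q h k u -> is_rep q h k v -> same u v -> u = v.
Proof.
move=> /forallP ru /forallP rv suv.
have := implyP (ru v) suv; have := implyP (rv u); rewrite same_sym => /(_ suv) l1 l2.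
apply: enum_rank_inj; apply/val_inj/eqP; rewrite eqn_leq l1 l2.
done.
Qed.

Local Notation V := (spiro_V q h k).

Definition rep_of (a : T) : T := [arg min_(b < a | same a b) enum_rank b].

Lemma rep_ofP a : same a (rep_of a) /\ is_rep q h k (rep_of a).
Proof.
rewrite /rep_of; case: arg_minnP => [|b sab min]; first exact: same_refl.
split => //; apply/forallP => v; apply/implyP => sbv; apply: min.
exact: same_trans sab sbv.
Qed.

Definition cls (a : T) : V := exist _ (rep_of a) (proj2 (rep_ofP a)).

Lemma cls_same a : same a (val (cls a)).
Proof. exact: (proj1 (rep_ofP a)). Qed.

Lemma cls_eq a b : (cls a == cls b) = same a b.
Proof.
apply/eqP/idP => [E|sab].
  apply: (same_trans (cls_same a)); rewrite E same_sym; exact: cls_same.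
apply: val_inj; apply: rep_uniq; [exact: (proj2 (rep_ofP a))|exact: (proj2 (rep_ofP b))|].
have h1 := cls_same a; have h2 := cls_same b; rewrite /= in h1 h2.
rewrite same_sym in h1; exact: (same_trans h1 (same_trans sab h2)).
Qed.

Lemma clsK (v : V) : cls (val v) = v.
Proof.
apply: val_inj; apply: rep_uniq; [exact: (proj2 (rep_ofP _))|exact: valP|].
have h1 := cls_same (val v); rewrite /= in h1; by rewrite same_sym.
Qed.

Lemma same_cls (v : V) a : same (val v) a = (v == cls a).
Proof. by rewrite -cls_eq clsK. Qed.

Lemma tedgeP (a b : T) : tedge a b <-> ((a.1 : nat) = b.1 /\
  ((b.2:nat) = a.2.+1 \/ (a.2.+1 = q /\ (b.2:nat) = 0) \/ (a.2:nat) = b.2.+1 \/ (b.2.+1 = q /\ (a.2:nat) = 0))).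
Proof. rewrite /tedge -cyc_adjP; split; [case/andP => /eqP -> -> // | case => -> ->; by rewrite eqxx]. Qed.

Lemma tedge_sym (a b : T) : tedge a b = tedge b a.
Proof. apply/idP/idP => /tedgeP H; apply/tedgeP; lia. Qed.

Lemma tedge_not_same (c b : T) : tedge c b -> ~~ same c b.
Proof.
move/tedgeP; rewrite sameE negb_or; case: c => [[c1 ?] [c2 ?]]; case: b => [[b1 ?] [b2 ?]].
rewrite /glue /= => H; apply/andP; split.
  apply/negP => /eqP [E1 E2]; lia.
lia.
Qed.

Lemma key (c b c' b' : T) : tedge c b -> tedge c' b' -> same c c' -> same b b' ->
  c = c' /\ b = b'.
Proof.
move=> t1 t2; rewrite !sameE => /orP[/eqP E1|g1] /orP[/eqP E2|g2]; first by [];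
 exfalso; move/tedgeP: t1; move/tedgeP: t2; try subst; try move: g1; try move: g2;
 try case: c => [[c1 ?] [c2 ?]]; try case: b => [[b1 ?] [b2 ?]];
 try case: c' => [[c1' ?] [c2' ?]]; try case: b' => [[b1' ?] [b2' ?]]; rewrite /glue /=; lia.
Qed.

Local Notation adj := (spiro_adj q h k).

Definition D (u : V) := [set p : T * T | same (val u) p.1 && tedge p.1 p.2].

Lemma adj_img u v : adj u v = (v \in [set cls p.2 | p in D u]).
Proof.
apply/idP/idP.
  case/andP=> _ /existsP[a /existsP[b /and4P[sa sb e1 ca]]].
  apply/imsetP; exists (a, b); first by rewrite inE /= sa /tedge /= ca andbT val_eqE.
  by apply/eqP; rewrite -same_cls.
case/imsetP => [[c b]]; rewrite inE /= => /andP[sc tcb] ->.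
apply/andP; split.
  apply/negP => /eqP E.
  have sub : same (val u) b by rewrite E same_sym cls_same.
  have := tedge_not_same tcb; rewrite (same_trans _ sub) //; by rewrite same_sym.
apply/existsP; exists c; apply/existsP; exists b.
case/andP: tcb => e1 ->; rewrite sc -val_eqE e1 same_sym cls_same.
done.
Qed.

Lemma D_inj u : {in D u &, injective (fun p => cls p.2)}.
Proof.
move=> [c b] [c' b']; rewrite !inE /= => /andP[sc t] /andP[sc' t'] /eqP E.
rewrite cls_eq in E.
have scc : same c c' by rewrite same_sym in sc; exact: same_trans sc sc'.
by case: (key t t' scc E) => -> ->.
Qed.

Lemma nbr_sum (R : nmodType) (G : V -> R) u :
  (\sum_(v | adj u v) G v = \sum_(c | same (val u) c) \sum_(b | tedge c b) G (cls b))%R.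
Proof.
rewrite pair_big_dep (eq_bigl _ _ (adj_img u)) big_imset /=; last exact: D_inj.
by apply: eq_bigl => p; rewrite inE.
Qed.

Lemma deg_D u : deg V adj u = #|D u|.
Proof.
rewrite /deg -(card_in_imset (@D_inj u)); apply: eq_card => v; by rewrite inE adj_img.
Qed.

Lemma succ_lt (j : 'I_q) : (if j.+1 == q then 0 else j.+1) < q.
Proof. have := ltn_ord j; case: ifP => [/eqP|/negbT]; lia. Qed.

Lemma pred_lt (j : 'I_q) : (if j == 0 :> nat then q.-1 else j.-1) < q.
Proof. have := ltn_ord j; case: ifP => [/eqP|/negbT]; lia. Qed.

Lemma nb2 (c : T) : #|[set b | tedge c b]| = 2.
Proof.
have -> : [set b | tedge c b] = [set (c.1, Ordinal (succ_lt c.2)); (c.1, Ordinal (pred_lt c.2))].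
  apply/setP => b; rewrite !inE; case: c => [c1 [c2 hc2]]; case: b => [b1 [b2 hb2]].
  rewrite !xpair_eqE -!val_eqE /=.
  apply/idP/idP.
    move/tedgeP => /=; case: ifP => [/eqP|/negbT] ?; case: ifP => [/eqP|/negbT] ? H;
     apply/orP; lia.
  move=> H; apply/tedgeP => /=; move: H;
    case: ifP => [/eqP|/negbT] ?; case: ifP => [/eqP|/negbT] ? H; lia.
rewrite cards2 xpair_eqE -!val_eqE /= eqxx /=.
case: c => [c1 [c2 hc2]] /=.
case: ifP => [/eqP|/negbT] ?; case: ifP => [/eqP|/negbT] ? ; try lia.
Qed.

Lemma sum_nb (c : T) : \sum_(b | tedge c b) 1 = 2.
Proof. by rewrite sum1_card -(nb2 c); apply: eq_card => b; rewrite inE. Qed.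

Lemma card_D u : #|D u| = 2 * #|[set x | same (val u) x]|.
Proof.
rewrite -sum1_card.
rewrite (eq_bigl (fun p : T * T => same (val u) p.1 && tedge p.1 p.2)); last first.
  by move=> p; rewrite inE.
rewrite -(pair_big_dep _ _ (fun _ _ => 1)) /=.
rewrite (eq_bigr (fun _ => 2)); last by move=> c _; exact: sum_nb.
rewrite sum_nat_const mulnC; congr (_ * _); apply: eq_card => x; by rewrite inE.
Qed.

Definition cut (c : T) := [exists x, glue c x].

Lemma glue_uniq c x y : glue c x -> glue c y -> x = y.
Proof. by move=> g1 g2; apply: glue2 g2; rewrite glue_sym. Qed.

Lemma glue_irr c : ~~ glue c c.
Proof. case: c => [[c1 ?] [c2 ?]]; rewrite /glue /=; lia. Qed.

Lemma clsz c : #|[set x | same c x]| = (cut c).+1.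
Proof.
rewrite /cut; case: existsP => [[x g]|ng].
  have -> : [set x | same c x] = [set c; x].
    apply/setP => y; rewrite !inE sameE; apply/orP/orP => [[/eqP->|g']|[/eqP->|/eqP->]].
    - by left.
    - by right; rewrite (glue_uniq g' g).
    - by left.
    - by right.
  rewrite cards2; case: eqP => // E; by move: (glue_irr c); rewrite {2}E g.
have -> : [set x | same c x] = [set c].
  apply/setP => y; rewrite !inE sameE [c == y]eq_sym; case: (y == c) => //=; apply/negP => g; apply: ng; by exists y.
by rewrite cards1.
Qed.

Lemma same_set (a b : T) : same a b -> [set x | same a x] = [set x | same b x].
Proof.
move=> sab; apply/setP => x; rewrite !inE; apply/idP/idP => H.
  by rewrite same_sym in sab; exact: same_trans sab H.
exact: same_trans sab H.
Qed.

Lemma deg_cls c : deg V adj (cls c) = 2 * (cut c).+1.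
Proof.
by rewrite deg_D card_D -(same_set (cls_same c)) clsz.
Qed.

Lemma cutP (c : T) : cut c <-> (((c.2:nat) = h /\ c.1.+1 < k) \/ ((c.2:nat) = 0 /\ 0 < c.1)).
Proof.
split.
  case/existsP => x; case: c => [[c1 ?] [c2 ?]]; case: x => [[x1 ?] [x2 ?]]; rewrite /glue /=; lia.
case: c => [[c1 hc1] [c2 hc2]] /= [[e1 e2]|[e1 e2]]; apply/existsP.
  have l1 : 0 < q by lia.
  exists (Ordinal e2, Ordinal l1); rewrite /glue /=; lia.
have l1 : c1.-1 < k by lia.
have l2 : h < q by lia.
exists (Ordinal l1, Ordinal l2); rewrite /glue /=; lia.
Qed.

Lemma no_adj_cut c b : tedge c b -> cut c -> cut b -> False.
Proof. move=> /tedgeP t /cutP c1 /cutP c2; lia. Qed.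

Lemma cut_nat (c : T) : (cut c : nat) =
  ((c.2 == h :> nat) && (c.1.+1 < k)) + ((c.2 == 0 :> nat) && (0 < c.1)).
Proof.
have -> : cut c = ((c.2 == h :> nat) && (c.1.+1 < k)) || ((c.2 == 0 :> nat) && (0 < c.1)).
  by apply/idP/idP => [/cutP H | H]; [|apply/cutP]; lia.
have : (c.2 == h :> nat) -> (c.2 == 0 :> nat) = false by move=> /eqP ->; lia.
by case: (c.2 == h :> nat); case: (c.2 == 0 :> nat); case: (c.1.+1 < k); case: (0 < c.1) => // /(_ isT).
Qed.

Lemma count_cut : \sum_(c : T) (cut c : nat) = 2 * k.-1.
Proof.
have E : forall F : T -> nat, \sum_(c : T) F c = \sum_(i < k) \sum_(j < q) F (i, j).
  by move=> F; rewrite pair_big /=; apply: eq_bigr => -[a b].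
rewrite E.
rewrite (eq_bigr (fun i : 'I_k => ((i.+1 < k) : nat) + ((0 < i) : nat))); last first.
  move=> i _; under eq_bigr do rewrite cut_nat /=.
  have hq : h < q by lia.
  have q0 : 0 < q by lia.
  by rewrite big_split /= (sum_eq1 hq) (sum_eq1 q0).
by rewrite big_split /= sum_s1 sum_s2 addnn mul2n.
Qed.

Definition W (R : rcfType) (c b : T) : R :=
  Num.sqrt ((((2 * (cut c).+1) ^ 2 + (2 * (cut b).+1) ^ 2)%N)%:R).

Lemma sombor_T (R : rcfType) :
  sombor R V adj = (2^-1 * \sum_(c : T) \sum_(b | tedge c b) W R c b)%R.
Proof.
rewrite /sombor; congr (_ * _)%R.
under eq_bigr => u _ do rewrite nbr_sum.
rewrite (eq_bigr (fun u => \sum_(c | same (val u) c)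
     \sum_(b | tedge c b) Num.sqrt ((((deg V adj (cls c)) ^ 2 + (deg V adj (cls b)) ^ 2)%N)%:R : R))%R); last first.
  move=> u _; apply: eq_bigr => c; rewrite same_cls => /eqP <-.
  done.
under eq_bigr do rewrite big_mkcond.
rewrite exchange_big; apply: eq_bigr => c _; rewrite -big_mkcond /=.
rewrite (big_pred1 (cls c)); last by move=> u; rewrite same_cls.
apply: eq_bigr => b _; by rewrite /W !deg_cls.
Qed.

Lemma sum_const_tedge (c : T) (n : nat) : \sum_(b | tedge c b) n = n * 2.
Proof.
rewrite (eq_bigr (fun _ => n * 1)); last by move=> b _; rewrite muln1.
by rewrite -big_distrr /= sum_nb.
Qed.

Lemma N1 : \sum_(c : T) \sum_(b | tedge c b) 1 = 2 * (k * q).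
Proof.
rewrite (eq_bigr (fun _ => 2)); last by move=> c _; exact: sum_nb.
by rewrite sum_nat_const card_prod !card_ord mulnC.
Qed.

Lemma N2 : \sum_(c : T) \sum_(b | tedge c b) (cut c + cut b) = 4 * (2 * k.-1).
Proof.
rewrite (eq_bigr (fun c => \sum_(b | tedge c b) (cut c : nat) + \sum_(b | tedge c b) (cut b : nat)));
  last by move=> c _; rewrite big_split.
rewrite big_split /=.
rewrite (eq_bigr (fun c => (cut c : nat) * 2)); last by move=> c _; exact: sum_const_tedge.
under [X in _ + X = _]eq_bigr do rewrite big_mkcond.
rewrite exchange_big /=.
rewrite [X in _ + X = _](eq_bigr (fun b => (cut b : nat) * 2)); last first.
  move=> b _; rewrite -big_mkcond /=.
  rewrite (eq_bigl (fun c => tedge b c)); last by move=> c; rewrite tedge_sym.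
  exact: sum_const_tedge.
by rewrite -big_distrl /= count_cut; lia.
Qed.

Lemma W_val (R : rcfType) c b : tedge c b ->
  W R c b = (Num.sqrt (8%:R) * (1%N)%:R + (Num.sqrt (20%:R) - Num.sqrt (8%:R)) * ((cut c + cut b)%N)%:R)%R.
Proof.
move=> t; have := no_adj_cut t; rewrite /W.
case: (cut c); case: (cut b) => H //=; first (by exfalso; exact: H);
  rewrite ?addn0 ?add0n ?mulr1 ?mulr0 ?addr0 //.
- by rewrite addrC subrK.
- by rewrite addrC subrK.
Qed.

Lemma sum_lin (R : comNzRingType) (I J : finType) (P : pred I) (Q : I -> pred J)
   (a e : R) (f g : I -> J -> nat) :
  (\sum_(i | P i) \sum_(j | Q i j) (a * (f i j)%:R + e * (g i j)%:R) =
   a * (\sum_(i | P i) \sum_(j | Q i j) f i j)%:R + e * (\sum_(i | P i) \sum_(j | Q i j) g i j)%:R)%R.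
Proof.
rewrite !natr_sum !mulr_sumr -big_split /=; apply: eq_bigr => i _.
by rewrite !natr_sum !mulr_sumr -big_split.
Qed.

Local Open Scope ring_scope.
Lemma main_sec (R : rcfType) : (0 < k)%N ->
  sombor R V adj =
    ((2 * q%:R * k%:R - 8 * k%:R + 8) * Num.sqrt (2 : R)
    + (8 * k%:R - 8) * Num.sqrt (5 : R))%R.
Proof.
move=> Hk.
rewrite sombor_T.
rewrite (eq_bigr (fun c => \sum_(b | tedge c b) (Num.sqrt (8%:R) * (1%N)%:R +
   (Num.sqrt (20%:R) - Num.sqrt (8%:R)) * ((cut c + cut b)%N)%:R : R)%R)); last first.
  by move=> c _; apply: eq_bigr => b t; exact: W_val.
rewrite sum_lin N1 N2.
have s8 : Num.sqrt (8%:R : R) = (2 * Num.sqrt 2)%R.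
  rewrite (_ : 8%:R = 2 ^+ 2 * 2)%R; last by ring.
  by rewrite sqrtrM ?sqrtr_sqr ?ger0_norm // exprn_ge0.
have s20 : Num.sqrt (20%:R : R) = (2 * Num.sqrt 5)%R.
  rewrite (_ : 20%:R = 2 ^+ 2 * 5)%R; last by ring.
  by rewrite sqrtrM ?sqrtr_sqr ?ger0_norm // exprn_ge0.
rewrite s8 s20.
rewrite !natrM.
have -> : (k%:R : R) = ((k.-1)%:R + 1)%R by rewrite natr1 prednK.
have n2 : (2 : R) != 0 by rewrite pnatr_eq0.
apply: (mulfI n2); rewrite mulVKf //.
ring.
Qed.

End Spiro.

Unset Implicit Arguments.
Local Open Scope ring_scope.

Theorem mainTheorem7 (R : rcfType) (q h k : nat) :
  (3 <= q)%N -> (1 <= k)%N -> (2 <= h)%N -> (h <= q./2)%N ->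
  sombor R (spiro_V q h k) (spiro_adj q h k) =
    (2 * q%:R * k%:R - 8 * k%:R + 8) * Num.sqrt (2 : R)
    + (8 * k%:R - 8) * Num.sqrt (5 : R).
Proof.
move=> Hq Hk Hh Hhq.
apply: main_sec => //; lia.
Qed.
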